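(* Let $(X,d)$ be a compact metric space and $F:X\to 2^X$ a continuous, onto set-valued map. The following are equivalent: (a) $F$ has the shadowing property. (b) For every $\varepsilon>0$ there exist $\delta>0$ and $N\in\mathbb N$ such that for every $\delta$-pseudo-orbit $\{x_n\}_{n\ge0}$ of $F$ for which there are points $x_i^N\in F^N(x_i)$ with $d(x_i^N,x_{i+N})<\varepsilon/2$ for all $i\ge0$, the sequence $\{x_{n+N}\}_{n\ge0}$ is $\varepsilon$-shadowed by some $F$-orbit. (c) For every $\varepsilon>0$ there exist $\delta>0$ and $N\in\mathbb N$ such that for every $\delta$-pseudo-orbit $\{x_n\}_{n\ge0}$ of $F$ for which there are points $x_i^N\in F^N(x_i)$ with $d(x_i^N,x_{i+N})<\varepsilon/2$ for all $i\ge0$, the sequence $\{x_n^N\}_{n\ge0}$ is $\varepsilon$-shadowed by some $F$-orbit.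
   Context: $2^X$ is the family of nonempty compact subsets of $X$. $F$ is upper semicontinuous if for every $x$ and open $U\supset F(x)$ there is a neighborhood $V$ of $x$ with $F(y)\subset U$ for $y\in V$; lower semicontinuous if for every $x$ and open $U$ with $F(x)\cap U\ne\emptyset$ there is a neighborhood $V$ of $x$ with $F(y)\cap U\neq\emptyset$ for $y\in V$; continuous if both. $F$ is onto if every $y\in X$ lies in some $F(x)$. For $A\subset X$, $F(A)=\bigcup_{a\in A}F(a)$; $F^1=F$ and $F^{N}(x)=F(F^{N-1}(x))$. A $\delta$-pseudo-orbit of $F$ is $\{x_n\}_{n\ge0}$ with $d(x_{n+1},F(x_n))<\delta$ for all $n$; an $F$-orbit is $(y_n)_{n\ge0}$ with $y_{n+1}\in F(y_n)$; a sequence $\{z_n\}$ is $\varepsilon$-shadowed by the $F$-orbit $(y_n)$ if $d(z_n,y_n)<\varepsilon$ for all $n$. $F$ has the shadowing property if for every $\varepsilon>0$ there is $\delta>0$ such that every $\delta$-pseudo-orbit is $\varepsilon$-shadowed by some $F$-orbit. *)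

(* Defs.v *)
From HB Require Import structures.
From mathcomp Require Import all_boot all_order all_algebra.
From mathcomp Require Import all_classical all_reals all_analysis.
Set Implicit Arguments. Unset Strict Implicit. Unset Printing Implicit Defensive.
Import Order.TTheory GRing.Theory Num.Theory.
Local Open Scope classical_set_scope.
Local Open Scope ring_scope.

Section SetValued.
Context {R : realType} {X : metricType R}.

Definition setvalued_map (F : X -> set X) : Prop :=
  forall x, F x !=set0 /\ compact (F x).

Definition usc (F : X -> set X) : Prop :=
  forall x (U : set X), open U -> F x `<=` U -> \forall y \near x, F y `<=` U.

Definition lsc (F : X -> set X) : Prop :=
  forall x (U : set X), open U -> F x `&` U !=set0 ->
    \forall y \near x, F y `&` U !=set0.

Definition sv_continuous (F : X -> set X) : Prop := usc F /\ lsc F.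

Definition sv_onto (F : X -> set X) : Prop := forall y, exists x, F x y.

Definition sv_image (F : X -> set X) (A : set X) : set X :=
  \bigcup_(a in A) F a.

Fixpoint sv_iter (F : X -> set X) (n : nat) (x : X) : set X :=
  match n with
  | O => [set x]
  | S m => sv_image F (sv_iter F m x)
  end.

(* d(x_{n+1}, F(x_n)) < delta, with d(y, A) = inf_{a in A} d(y, a) *)
Definition pseudo_orbit (F : X -> set X) (delta : R) (x : nat -> X) : Prop :=
  forall n, exists2 a, F (x n) a & mdist (x n.+1) a < delta.

Definition orbit (F : X -> set X) (y : nat -> X) : Prop :=
  forall n, F (y n) (y n.+1).

Definition shadowed_by (eps : R) (z y : nat -> X) : Prop :=
  forall n, mdist (z n) (y n) < eps.

Definition eps_shadowed (F : X -> set X) (eps : R) (z : nat -> X) : Prop :=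
  exists y, orbit F y /\ shadowed_by eps z y.

Definition shadowing (F : X -> set X) : Prop :=
  forall eps, 0 < eps -> exists2 delta, 0 < delta &
    forall x, pseudo_orbit F delta x -> eps_shadowed F eps x.

End SetValued.

(* Main.v *)
Require Import Defs.
From HB Require Import structures.
From mathcomp Require Import all_boot all_order all_algebra.
From mathcomp Require Import all_classical all_reals all_analysis.
From mathcomp Require Import lra.
Import Order.TTheory GRing.Theory Num.Theory.
Local Open Scope classical_set_scope.
Local Open Scope ring_scope.
Section S.
Context (R : realType) (X : metricType R) (F : X -> set X).

Lemma tri (x y z : X) : mdist x z <= mdist x y + mdist y z.
Proof. exact: metric_triangle. Qed.
Lemma msym (x y : X) : mdist x y = mdist y x.
Proof. exact: metric_sym. Qed.

Lemma inball (c a : X) e : (ball c e)° a -> mdist c a < e.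
Proof. by move/interior_subset; rewrite ballEmdist. Qed.

Lemma ctr (c : X) e : 0 < e -> (ball c e)° c.
Proof. by move=> e0; rewrite /interior; apply: nbhsx_ballx. Qed.

Lemma local_unif (u : X) (e : R) : 0 < e -> setvalued_map F -> sv_continuous F ->
  exists2 r, 0 < r & forall v v', mdist u v < r -> mdist u v' < r ->
    forall a, F v a -> exists b, F v' b /\ mdist a b < e.
Proof.
move=> e0 Fsv [Fu Fl].
have e40 : 0 < e / 4 by rewrite divr_gt0.
have e20 : 0 < e / 2 by rewrite divr_gt0.
have H1 : \forall v' \near u, F u `<=` (fun c => exists b, F v' b /\ mdist c b < e / 2).
  have cpt := (Fsv u).2.
  move/compact_near_coveringP: cpt => /(_ X (nbhs u) (fun v' c => exists b, F v' b /\ mdist c b < e / 2) _).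
  apply => c Fuc.
  have := Fl u _ (@open_interior _ (ball c (e/4))) (ex_intro _ c (conj Fuc (@ctr c (e/4) e40))).
  move=> Hn.
  exists (ball c (e/4), fun v' => F v' `&` (ball c (e / 4))° !=set0).
    by split => //=; apply: nbhsx_ballx.
  move=> [c' v'] /= [cc' [b [Fb bb]]]; exists b; split => //.
  rewrite ballEmdist /= in cc'.
  have := @inball _ _ _ bb => cb.
  rewrite msym in cc'.
  apply: (le_lt_trans (tri c' c b)); lra.
pose U := \bigcup_(c in F u) (ball c (e / 2))°.
have oU : open U by apply: bigcup_open => c _; exact: open_interior.
have FuU : F u `<=` U by move=> c Fuc; exists c => //; exact: ctr.
have H2 := Fu u U oU FuU.
have HH : nbhs u (_ `&` _) := filterI H1 H2. have := iffLR (nbhs_ballP _ _) (HH (nbhs_filter u)). move=> [r /= r0 Hr].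
exists r => // v v' uv uv' a Fva.
have := Hr v; rewrite ballEmdist => /(_ uv) [_ Hv].
have := Hr v'; rewrite ballEmdist => /(_ uv') [Hv' _].
have [c Fuc ca] := Hv a Fva.
have [b [Fb cb]] := Hv' c Fuc.
have := @inball _ _ _ ca => ca'.
exists b; split => //; rewrite msym in ca'.
apply: (le_lt_trans (tri a c b)); lra.
Qed.

Lemma unif_lsc : compact [set: X] -> setvalued_map F -> sv_continuous F ->
  forall e, 0 < e -> exists2 eta, 0 < eta & forall v v' a, mdist v v' < eta ->
    F v a -> exists b, F v' b /\ mdist a b < e.
Proof.
move=> cX Fsv Fc e e0.
pose P := fun (eta : R) (w : X) => forall v v', mdist w v < eta -> mdist w v' < eta ->
    forall a, F v a -> exists b, F v' b /\ mdist a b < e.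
have H : \forall eta \near (0:R)^'+, [set: X] `<=` P eta.
  move/compact_near_coveringP: cX => /(_ R (nbhs (0:R)^'+) P _); apply => x _.
  have [r r0 Hr] := @local_unif x e e0 Fsv Fc.
  have r20 : 0 < r / 2 by rewrite divr_gt0.
  exists (ball x (r/2), [set eta | eta < r/2]).
    split => /=; first exact: nbhsx_ballx.
    exact: nbhs_right_lt.
  move=> [w eta] /= [xw etar] v v' wv wv' a Fva.
  rewrite ballEmdist /= in xw.
  apply: (Hr v v') => //.
    by apply: (le_lt_trans (tri x w v)); lra.
  by apply: (le_lt_trans (tri x w v')); lra.
have HH : (nbhs (0:R)^'+) (fun eta => ([set: X] `<=` P eta) /\ 0 < eta).
  exact: filterI H (nbhs_right_gt 0).
have [eta [H1 H2]] := filter_ex HH.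
exists eta => // v v' a vv' Fva.
apply: (H1 v I v v') => //.
by rewrite mdistxx.
Qed.

Lemma po_mono d1 d2 x : d1 <= d2 -> pseudo_orbit F d1 x -> pseudo_orbit F d2 x.
Proof.
move=> d12 H n; have [a Fa Ha] := H n; exists a => //; exact: lt_le_trans Ha d12.
Qed.

Lemma approx : compact [set: X] -> setvalued_map F -> sv_continuous F ->
  forall N c, 0 < c -> exists2 delta, 0 < delta & forall x, pseudo_orbit F delta x ->
  forall i, exists p, sv_iter F N (x i) p /\ mdist p (x (i + N)%N) < c.
Proof.
move=> cX Fsv Fc; elim=> [|N IH] c c0.
  exists 1 => // x _ i; exists (x i); split => //; by rewrite addn0 mdistxx.
have c20 : 0 < c / 2 by rewrite divr_gt0.
have [eta eta0 Heta] := @unif_lsc cX Fsv Fc _ c20.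
have [d0 d00 Hd0] := IH eta eta0.
exists (Num.min d0 (c/2)); first by rewrite lt_min d00 c20.
move=> x px i.
have md : Num.min d0 (c/2) <= d0 by rewrite ge_min lexx.
have [q [Hq dq]] := Hd0 x (@po_mono (Num.min d0 (c/2)) d0 x md px) i.
have [a Fa da] := px (i + N)%N.
have [b [Fb ab]] := Heta _ _ a (eq_ind _ (fun t => t < eta) dq _ (metric_sym _ _)) Fa.
exists b; split.
  by exists q.
rewrite addnS.
have da' : mdist (x (i + N).+1) a < c / 2 by apply: (lt_le_trans da); by rewrite ge_min lexx orbT.
rewrite msym in da'.
apply: (le_lt_trans (tri b a _)); rewrite msym; lra.
Qed.

Lemma B2A : compact [set: X] -> setvalued_map F -> sv_continuous F -> sv_onto F ->
  (forall eps : R, 0 < eps -> exists2 delta : R, 0 < delta & exists2 N : nat, (0 < N)%N &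
     exists2 c : R, 0 < c &
      forall x : nat -> X, pseudo_orbit F delta x ->
      forall xN : nat -> X,
        (forall i, sv_iter F N (x i) (xN i) /\ mdist (xN i) (x (i + N)%N) < c) ->
        eps_shadowed F eps (fun n => x (n + N)%N)) -> shadowing F.
Proof.
move=> cX Fsv Fc Fo H eps eps0.
have [delta d0 [N N0 [c c0 Hd]]] := H eps eps0.
have [d1 d10 Hd1] := @approx cX Fsv Fc N c c0.
exists (Num.min delta d1); first by rewrite lt_min d0 d10.
move=> x px.
have [g Hg] := @choice X X (fun y z => F z y) Fo.
pose z n := if (n < N)%N then iter (N - n) g (x 0%N) else x (n - N)%N.
have hz : forall n, (n <= N)%N -> z n = iter (N - n) g (x 0%N).
  move=> n; rewrite leq_eqVlt => /orP [/eqP ->|nN]; last by rewrite /z nN.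
  by rewrite /z ltnn subnn.
have pz : pseudo_orbit F (Num.min delta d1) z.
  move=> n; case: (ltnP n N) => nN.
    exists (z n.+1); last by rewrite mdistxx lt_min d0 d10.
    rewrite (hz n (ltnW nN)) (hz n.+1 nN) -(subnSK nN) /=; exact: Hg.
  have [a Fa da] := px (n - N)%N.
  exists a.
    by rewrite /z ifF // ltnNge nN.
  rewrite /z ifF; last by rewrite ltnNge (leqW nN).
  by rewrite subSn.
have m1 : Num.min delta d1 <= d1 by rewrite ge_min lexx orbT.
have m2 : Num.min delta d1 <= delta by rewrite ge_min lexx.
have [zN HzN] := choice (Hd1 z (@po_mono _ _ z m1 pz)).
have [y [oy sy]] := Hd z (@po_mono _ _ z m2 pz) zN HzN.
exists y; split => // n; have := sy n.
by rewrite /z ltnNge leq_addl /= addnK.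
Qed.
End S.

Theorem proposition3p19 (R : realType) (X : metricType R) (F : X -> set X) :
  compact [set: X] -> setvalued_map F -> sv_continuous F -> sv_onto F ->
  (shadowing F <->
   (forall eps : R, 0 < eps -> exists2 delta : R, 0 < delta & exists2 N : nat, (0 < N)%N &
      forall x : nat -> X, pseudo_orbit F delta x ->
      forall xN : nat -> X,
        (forall i, sv_iter F N (x i) (xN i) /\ mdist (xN i) (x (i + N)%N) < eps / 2) ->
        eps_shadowed F eps (fun n => x (n + N)%N)))
  /\
  (shadowing F <->
   (forall eps : R, 0 < eps -> exists2 delta : R, 0 < delta & exists2 N : nat, (0 < N)%N &
      forall x : nat -> X, pseudo_orbit F delta x ->
      forall xN : nat -> X,
        (forall i, sv_iter F N (x i) (xN i) /\ mdist (xN i) (x (i + N)%N) < eps / 2) ->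
        eps_shadowed F eps xN)).

Proof.
move=> cX Fsv Fc Fo.
have hlf : forall eps : R, 0 < eps -> 0 < eps / 2 by move=> e e0; rewrite divr_gt0.
split; split.
- move=> Hs eps eps0; have [delta d0 Hd] := Hs eps eps0.
  exists delta => //; exists 1%N => // x px xN _.
  have [y [oy sy]] := Hd x px.
  exists (fun n => y (n + 1)%N); split.
    by move=> n; rewrite addSn; exact: oy.
  by move=> n; exact: sy.
- move=> H; apply: (@B2A R X F cX Fsv Fc Fo) => eps eps0.
  have [delta d0 [N N0 Hd]] := H eps eps0.
  exists delta => //; exists N => //; exists (eps / 2); [exact: hlf | exact: Hd].
- move=> Hs eps eps0; have [delta d0 Hd] := Hs _ (hlf _ eps0).
  exists delta => //; exists 1%N => // x px xN HxN.
  have [y [oy sy]] := Hd x px.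
  exists (fun n => y (n + 1)%N); split.
    by move=> n; rewrite addSn; exact: oy.
  move=> n; have := sy (n + 1)%N; have := (HxN n).2 => h1 h2.
  apply: (le_lt_trans (metric_triangle _ (x (n + 1)%N) _)); lra.
- move=> H; apply: (@B2A R X F cX Fsv Fc Fo) => eps eps0.
  have [delta d0 [N N0 Hd]] := H _ (hlf _ eps0).
  exists delta => //; exists N => //; exists (eps / 2 / 2); first by rewrite !divr_gt0.
  move=> x px xN HxN; have [y [oy sy]] := Hd x px xN HxN.
  exists y; split => // n; have := sy n; have := (HxN n).2 => h1 h2.
  rewrite metric_sym in h1.
  apply: (le_lt_trans (metric_triangle _ (xN n) _)); lra.
Qed.
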